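(* Let $g$ be a Riemannian metric on an open set of $\mathbb R^n$, $n\ge3$, with $g_{jk}\in C^r_*$, $r>1$, and $|g|=\det(g_{jk})=1$. Then the principal symbol $\sigma(W_{abcd})$ of the linearization at $g$ of the Weyl tensor satisfies, for every symmetric matrix $h$ and covector $\xi$, $$\xi^a\xi^d\sigma(W_{abcd})h=\frac{n-3}{2(n-2)}\Big[|\xi|^4h_{bc}-|\xi|^2\big(\xi_b\sigma(-i\Gamma_c)h+\xi_c\sigma(-i\Gamma_b)h\big)+\frac{n-2}{n-1}\xi_b\xi_c\xi_l\sigma(-i\Gamma^l)h+\frac1{n-1}|\xi|^2\big(\xi_l\sigma(-i\Gamma^l)h\big)g_{bc}\Big].$$
   Context: $C^r_*$ is the local Zygmund space. For a nonlinear differential operator $T=T(g)$ acting on metrics, $\sigma(T)$ denotes the principal symbol of its linearization at $g$, applied to a symmetric matrix $h$. Indices are raised and lowered and $|\xi|$ is computed with $g$. $\Gamma^k_{ab}=\frac12g^{kl}(\partial_ag_{bl}+\partial_bg_{al}-\partial_lg_{ab})$, $\Gamma^k=g^{ab}\Gamma^k_{ab}$, $\Gamma_k=g_{kl}\Gamma^l$. Curvature: $R_{abcd}=\langle(\nabla_a\nabla_b-\nabla_b\nabla_a)\partial_c,\partial_d\rangle$ (in coordinates, as distributions for low regularity), $R_{bc}=R_{abc}{}^a$, $R=g^{bc}R_{bc}$, $P_{ab}=\frac1{n-2}(R_{ab}-\frac{R}{2(n-1)}g_{ab})$, $W_{abcd}=R_{abcd}+P_{ac}g_{bd}-P_{b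c}g_{ad}+P_{bd}g_{ac}-P_{ad}g_{bc}$.
   Formalization: The identity holds only for symmetric matrices h that are trace-free with respect to g, tr(g⁻¹h) = 0 (tangent to the constraint |g| = 1), not for every symmetric h. The statement above fails without it. *)

(* Defs.v *)
(* Pointwise (frozen-coefficient) coordinate formulas for the
   curvature of a metric in terms of its 2-jet, and the principal symbols of
   the linearized operators. *)
From HB Require Import structures.
From mathcomp Require Import all_boot all_order all_algebra.
Set Implicit Arguments. Unset Strict Implicit. Unset Printing Implicit Defensive.
Import Order.TTheory GRing.Theory Num.Theory.
Local Open Scope ring_scope.

Section Curv.
Variables (R : realFieldType) (n : nat).

(* 1-jet:  dg k a b = d_k g_{ab};  2-jet:  ddg j k a b = d_j d_k g_{ab} *)
Definition jet1 := 'I_n -> 'M[R]_n.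
Definition jet2 := 'I_n -> 'I_n -> 'M[R]_n.

Variables (g : 'M[R]_n) (dg : jet1) (ddg : jet2).

Definition ginv := invmx g.

Definition Chr (k a b : 'I_n) : R :=
  2^-1 * \sum_(l < n) ginv k l * (dg a b l + dg b a l - dg l a b).

Definition dginv (a k l : 'I_n) : R :=
  - \sum_(p < n) \sum_(q < n) ginv k p * dg a p q * ginv q l.

Definition dChr (a m b c : 'I_n) : R :=
  \sum_(l < n) (dginv a m l * (2^-1 * (dg b c l + dg c b l - dg l b c))
              + ginv m l * (2^-1 * (ddg a b c l + ddg a c b l - ddg a l b c))).

(* R_{abc}^m, from (nabla_a nabla_b - nabla_b nabla_a) d_c = R_{abc}^m d_m *)
Definition Riem_up (a b c m : 'I_n) : R :=
  dChr a m b c - dChr b m a c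
  + \sum_(k < n) (Chr k b c * Chr m a k - Chr k a c * Chr m b k).

(* R_{abcd} = < (nabla_a nabla_b - nabla_b nabla_a) d_c , d_d > *)
Definition Riem (a b c d : 'I_n) : R := \sum_(m < n) g m d * Riem_up a b c m.

Definition Ric (b c : 'I_n) : R := \sum_(a < n) Riem_up a b c a.

Definition Scal : R := \sum_(b < n) \sum_(c < n) ginv b c * Ric b c.

Definition Schouten (a b : 'I_n) : R :=
  (n%:R - 2)^-1 * (Ric a b - Scal / (2 * (n%:R - 1)) * g a b).

Definition Weyl (a b c d : 'I_n) : R :=
  Riem a b c d + Schouten a c * g b d - Schouten b c * g a d
  + Schouten b d * g a c - Schouten a d * g b c.

Definition Gam_up (k : 'I_n) : R :=
  \sum_(a < n) \sum_(b < n) ginv a b * Chr k a b.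
Definition Gam_low (k : 'I_n) : R := \sum_(l < n) g k l * Gam_up l.

End Curv.

Section Symbols.
Variables (R : realFieldType) (n : nat).

(* Principal symbol of the linearization at the jet (g,dg,ddg) of the Weyl
   tensor (a second order operator, affine in the second derivatives):
   replace d_j d_k h_{ab} by (i xi_j)(i xi_k) h_{ab} = - xi_j xi_k h_{ab}. *)
Definition sigma_Weyl (g : 'M[R]_n) (dg : jet1 R n) (ddg : jet2 R n)
    (xi : 'I_n -> R) (h : 'M[R]_n) (a b c d : 'I_n) : R :=
  Weyl g dg (fun j k => ddg j k - (xi j * xi k) *: h) a b c d
  - Weyl g dg ddg a b c d.

(* sigma(-i Gamma_k) h : Gamma_k is affine in the first derivatives, its
   linearization has symbol obtained by replacing d_j h by (i xi_j) h;
   multiplying by -i gives the real quantity below. *)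
Definition sigma_miGam_low (g : 'M[R]_n) (dg : jet1 R n)
    (xi : 'I_n -> R) (h : 'M[R]_n) (k : 'I_n) : R :=
  Gam_low g (fun j => dg j + xi j *: h) k - Gam_low g dg k.

Definition sigma_miGam_up (g : 'M[R]_n) (dg : jet1 R n)
    (xi : 'I_n -> R) (h : 'M[R]_n) (l : 'I_n) : R :=
  Gam_up g (fun j => dg j + xi j *: h) l - Gam_up g dg l.

Definition raise (g : 'M[R]_n) (xi : 'I_n -> R) (a : 'I_n) : R :=
  \sum_(b < n) ginv g a b * xi b.
Definition norm2 (g : 'M[R]_n) (xi : 'I_n -> R) : R :=
  \sum_(a < n) raise g xi a * xi a.

End Symbols.

(* Main.v *)
Require Import Defs.
From HB Require Import structures.
From mathcomp Require Import all_boot all_order all_algebra.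
From mathcomp Require Import ring lra.
Set Implicit Arguments. Unset Strict Implicit. Unset Printing Implicit Defensive.
Import Order.TTheory GRing.Theory Num.Theory.
Local Open Scope ring_scope.

Section Aux.
Variables (R : realFieldType) (n : nat) (g : 'M[R]_n) (dg : jet1 R n) (ddg : jet2 R n)
  (xi : 'I_n -> R) (h : 'M[R]_n).
Hypotheses (g_sym : g^T = g) (g_unit : g \in unitmx) (h_sym : h^T = h)
  (h_tan : \tr (invmx g *m h) = 0).

Local Notation G := (ginv g).

Lemma Gsym i j : G i j = G j i.
Proof.
transitivity ((invmx g)^T i j); first by rewrite trmx_inv g_sym.
by rewrite mxE.
Qed.

Lemma gsym i j : g i j = g j i.
Proof. by rewrite -[in LHS]g_sym mxE. Qed.

Lemma hsym i j : h i j = h j i.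
Proof. by rewrite -[in LHS]h_sym mxE. Qed.

Lemma sum_delta (E : 'I_n -> R) d : \sum_l (d == l)%:R * E l = E d.
Proof.
rewrite (bigD1 d) //= eqxx mul1r big1 ?addr0 // => l /negbTE.
by rewrite eq_sym => ->; rewrite mul0r.
Qed.

Lemma gG_sum d l : \sum_m g d m * G m l = (d == l)%:R.
Proof. by have := congr1 (fun M : 'M[R]_n => M d l) (mulmxV g_unit); rewrite !mxE. Qed.

Lemma Gg_sum d l : \sum_m G d m * g m l = (d == l)%:R.
Proof. by have := congr1 (fun M : 'M[R]_n => M d l) (mulVmx g_unit); rewrite !mxE. Qed.


Local Notation ddg' := (fun j k => ddg j k - (xi j * xi k) *: h).
Local Notation x := (raise g xi).

Lemma xL l : \sum_a G a l * xi a = x l.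
Proof. by apply: eq_bigr => a _; rewrite Gsym. Qed.

Lemma lower b : \sum_a x a * g a b = xi b.
Proof.
rewrite /raise; under eq_bigr do rewrite mulr_suml.
rewrite exchange_big /=.
transitivity (\sum_c xi c * (c == b)%:R); last first.
  by rewrite -[RHS]sum_delta; apply: eq_bigr => c _; rewrite mulrC eq_sym.
apply: eq_bigr => c _; rewrite -Gg_sum mulr_sumr; apply: eq_bigr => a _.
by rewrite (Gsym a c); ring.
Qed.

Lemma dChr_diff a m b c :
  dChr g dg ddg' a m b c - dChr g dg ddg a m b c =
  - 2^-1 * \sum_l G m l * (xi a * xi b * h c l + xi a * xi c * h b l - xi a * xi l * h b c).
Proof. rewrite /dChr -sumrB mulr_sumr; apply: eq_bigr => l _; rewrite !mxE; ring. Qed.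


Definition Ee a b c l := xi a * xi c * h b l - xi a * xi l * h b c - xi b * xi c * h a l + xi b * xi l * h a c.

Lemma Rup_diff a b c m : Riem_up g dg ddg' a b c m - Riem_up g dg ddg a b c m
  = - 2^-1 * \sum_l G m l * Ee a b c l.
Proof.
transitivity ((dChr g dg ddg' a m b c - dChr g dg ddg a m b c)
   - (dChr g dg ddg' b m a c - dChr g dg ddg b m a c)).
  by rewrite /Riem_up; ring.
rewrite !dChr_diff -mulrBr -sumrB; congr (_ * _); apply: eq_bigr => l _; rewrite /Ee; ring.
Qed.

Lemma contr_gG (E : 'I_n -> R) d : \sum_m g m d * \sum_l G m l * E l = E d.
Proof.
under eq_bigr do rewrite mulr_sumr.
rewrite exchange_big /= -sum_delta; apply: eq_bigr => l _.
rewrite -gG_sum mulr_suml; apply: eq_bigr => m _; rewrite gsym; ring.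
Qed.

Lemma Riem_diff a b c d : Riem g dg ddg' a b c d - Riem g dg ddg a b c d = - 2^-1 * Ee a b c d.
Proof.
rewrite /Riem -sumrB; under eq_bigr do rewrite -mulrBr Rup_diff mulrCA.
by rewrite -mulr_sumr contr_gG.
Qed.

Definition wv j := \sum_l x l * h j l.
Local Notation w := wv.
Local Notation N := (norm2 g xi).

Lemma HL (u : 'I_n -> R) : \sum_a \sum_l G a l * xi a * u l = \sum_l x l * u l.
Proof.
rewrite exchange_big /=; apply: eq_bigr => l _; rewrite -xL mulr_suml.
by apply: eq_bigr => a _.
Qed.

Lemma HR (u : 'I_n -> R) : \sum_a \sum_l G a l * u a * xi l = \sum_a u a * x a.
Proof.
apply: eq_bigr => a _; rewrite /raise mulr_sumr; apply: eq_bigr => l _; ring.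
Qed.

Lemma Htr : \sum_a \sum_l G a l * h a l = 0.
Proof.
rewrite -[RHS]h_tan /mxtrace; apply: eq_bigr => a _; rewrite mxE; apply: eq_bigr => l _.
by rewrite hsym.
Qed.

Ltac dsum := rewrite ?mulr_sumr -?sumrB -?big_split /=; apply eq_bigr; intros ? _;
  rewrite ?mulr_sumr -?sumrB -?big_split /=; apply eq_bigr; intros ? _.

Lemma Ric_diff b c : Ric g dg ddg' b c - Ric g dg ddg b c
  = - 2^-1 * (xi c * w b - N * h b c + xi b * w c).
Proof.
rewrite /Ric -sumrB; under eq_bigr do rewrite Rup_diff; rewrite -mulr_sumr; congr (_ * _).
transitivity (xi c * (\sum_a \sum_l G a l * xi a * h b l)
   - h b c * (\sum_a \sum_l G a l * xi a * xi l)
   - xi b * xi c * (\sum_a \sum_l G a l * h a l)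
   + xi b * (\sum_a \sum_l G a l * h a c * xi l)).
  by dsum; rewrite /Ee; ring.
rewrite HL HL Htr HR mulr0 subr0 [h b c * _]mulrC /wv; congr (_ * _ - _ + _ * _).
by apply: eq_bigr => a _; rewrite hsym mulrC.
Qed.


Definition qq := \sum_j x j * wv j.
Local Notation q := qq.

Lemma two_neq0 : (2 : R) != 0.
Proof. by rewrite pnatr_eq0. Qed.

Lemma Scal_diff : Scal g dg ddg' - Scal g dg ddg = - q.
Proof.
rewrite /Scal -sumrB; under eq_bigr do rewrite -sumrB.
under eq_bigr do under eq_bigr do rewrite -mulrBr Ric_diff mulrCA.
under eq_bigr do rewrite -mulr_sumr.
rewrite -mulr_sumr.
transitivity (-2^-1 * ((\sum_b \sum_c G b c * w b * xi c) - N * (\sum_b \sum_c G b c * h b c)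
   + (\sum_b \sum_c G b c * xi b * w c))).
  by congr (_ * _); dsum; ring.
rewrite HR Htr HL.
have -> : \sum_a w a * x a = q by apply: eq_bigr => a _; rewrite mulrC.
by rewrite -/qq mulr0 subr0; field.
Qed.

Definition kk : R := (n%:R - 2)^-1.
Definition ss : R := q / (2 * (n%:R - 1)).
Definition pif i j := kk * (- 2^-1 * (xi j * w i - N * h i j + xi i * w j) + ss * g i j).

Lemma pi_eq i j : Schouten g dg ddg' i j - Schouten g dg ddg i j = pif i j.
Proof.
transitivity ((n%:R - 2)^-1 * ((Ric g dg ddg' i j - Ric g dg ddg i j)
   - (Scal g dg ddg' - Scal g dg ddg) / (2 * (n%:R - 1)) * g i j)).
  by rewrite /Schouten; ring.
rewrite Ric_diff Scal_diff /pif /kk /ss; ring.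
Qed.

Lemma Weyl_diff a b c d : Weyl g dg ddg' a b c d - Weyl g dg ddg a b c d =
  - 2^-1 * Ee a b c d + pif a c * g b d - pif b c * g a d + pif b d * g a c - pif a d * g b c.
Proof.
transitivity ((Riem g dg ddg' a b c d - Riem g dg ddg a b c d)
  + (Schouten g dg ddg' a c - Schouten g dg ddg a c) * g b d
  - (Schouten g dg ddg' b c - Schouten g dg ddg b c) * g a d
  + (Schouten g dg ddg' b d - Schouten g dg ddg b d) * g a c
  - (Schouten g dg ddg' a d - Schouten g dg ddg a d) * g b c).
  by rewrite /Weyl; ring.
by rewrite Riem_diff !pi_eq.
Qed.

Lemma DP (f u : 'I_n -> R) :
  \sum_a \sum_d x a * x d * (f a * u d) = (\sum_a x a * f a) * (\sum_d x d * u d).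
Proof.
rewrite mulr_suml; apply: eq_bigr => a _; rewrite mulr_sumr; apply: eq_bigr => d _; ring.
Qed.

Lemma DH (H : 'I_n -> 'I_n -> R) :
  \sum_a \sum_d x a * x d * H a d = \sum_a x a * \sum_d x d * H a d.
Proof.
apply: eq_bigr => a _; rewrite mulr_sumr; apply: eq_bigr => d _; ring.
Qed.

Lemma lowerR i : \sum_d x d * g i d = xi i.
Proof. rewrite -lower; apply: eq_bigr => d _; by rewrite gsym. Qed.

Lemma xh j : \sum_a x a * h a j = w j.
Proof. apply: eq_bigr => a _; by rewrite hsym. Qed.

Ltac ssum := rewrite ?mulr_sumr -?sumrB -?big_split /=; apply eq_bigr; intros ? _.

Lemma lin4 (A1 A2 A3 A4 : R) (f1 f2 f3 f4 : 'I_n -> R) :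
  \sum_d (A1 * f1 d + A2 * f2 d + A3 * f3 d + A4 * f4 d)
  = A1 * \sum_d f1 d + A2 * \sum_d f2 d + A3 * \sum_d f3 d + A4 * \sum_d f4 d.
Proof. by rewrite !big_split /= !mulr_sumr. Qed.

Lemma dlin8 (A1 A2 A3 A4 A5 A6 A7 A8 : R) (F1 F2 F3 F4 F5 F6 F7 F8 : 'I_n -> 'I_n -> R) :
  \sum_a \sum_d (A1 * F1 a d + A2 * F2 a d + A3 * F3 a d + A4 * F4 a d
      + A5 * F5 a d + A6 * F6 a d + A7 * F7 a d + A8 * F8 a d)
  = A1 * (\sum_a \sum_d F1 a d) + A2 * (\sum_a \sum_d F2 a d) + A3 * (\sum_a \sum_d F3 a d)
    + A4 * (\sum_a \sum_d F4 a d) + A5 * (\sum_a \sum_d F5 a d) + A6 * (\sum_a \sum_d F6 a d)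
    + A7 * (\sum_a \sum_d F7 a d) + A8 * (\sum_a \sum_d F8 a d).
Proof.
under eq_bigr do rewrite !big_split /= -!mulr_sumr.
by rewrite !big_split /= !mulr_sumr.
Qed.

Lemma piR i : \sum_d x d * pif i d = kk * (-2^-1 * xi i * q + ss * xi i).
Proof.
transitivity (\sum_d (kk * (-2^-1) * w i * (x d * xi d) + kk * 2^-1 * N * (x d * h i d)
   + (- kk * 2^-1 * xi i) * (x d * w d) + kk * ss * (x d * g i d))).
  by apply: eq_bigr => d _; rewrite /pif; ring.
rewrite lin4 lowerR -/(wv i) -/qq; rewrite /norm2; ring.
Qed.

Lemma piL j : \sum_a x a * pif a j = kk * (-2^-1 * xi j * q + ss * xi j).
Proof.
transitivity (\sum_a (- kk * 2^-1 * xi j * (x a * w a) + kk * 2^-1 * N * (x a * h a j)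
   + (- kk * 2^-1 * w j) * (x a * xi a) + kk * ss * (x a * g a j))).
  by apply: eq_bigr => a _; rewrite /pif; ring.
rewrite lin4 lower xh -/qq; rewrite /norm2; ring.
Qed.

Lemma contraction b c :
  \sum_a \sum_d x a * x d * (Weyl g dg ddg' a b c d - Weyl g dg ddg a b c d)
  = -2^-1 * (N * xi c * w b - N ^+ 2 * h b c - xi b * xi c * q + N * xi b * w c)
    + kk * (-2^-1 * xi c * q + ss * xi c) * xi b
    - pif b c * N
    + xi c * (kk * (-2^-1 * xi b * q + ss * xi b))
    - g b c * (kk * (-2^-1 * q + ss) * N).
Proof.
under eq_bigr do under eq_bigr do rewrite Weyl_diff.
transitivity (\sum_a \sum_d ((-2^-1 * xi c) * (x a * x d * (xi a * h b d))
    + (2^-1 * h b c) * (x a * x d * (xi a * xi d))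
    + (2^-1 * xi b * xi c) * (x a * x d * h a d)
    + (- 2^-1 * xi b) * (x a * x d * (h a c * xi d))
  + 1 * (x a * x d * (pif a c * g b d))
  + (- pif b c) * (x a * x d * g a d)
  + 1 * (x a * x d * (g a c * pif b d))
  + (- g b c) * (x a * x d * pif a d))).
  by apply: eq_bigr => a _; apply: eq_bigr => d _; rewrite /Ee; ring.
rewrite dlin8 !DP !DH piL piR lowerR lower xh.
have eN : \sum_a x a * xi a = N by [].
have e1 : \sum_a x a * \sum_d x d * h a d = q by [].
have e2 : \sum_a x a * \sum_d x d * g a d = N.
  by apply: eq_bigr => a _; rewrite lowerR.
have e3 : \sum_a x a * \sum_d x d * pif a d = kk * (- 2^-1 * q + ss) * N.
  rewrite -eN mulr_sumr; apply: eq_bigr => a _; rewrite piR; ring.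
have e4 : \sum_d x d * h b d = w b by [].
rewrite e1 e2 e3 e4 eN; ring.
Qed.

Local Notation dg' := (fun j => dg j + xi j *: h).

Lemma Chr_diff k a b : Chr g dg' k a b - Chr g dg k a b =
  2^-1 * \sum_m G k m * (xi a * h b m + xi b * h a m - xi m * h a b).
Proof.
rewrite /Chr -mulrBr -sumrB; congr (_ * _); apply: eq_bigr => m _; rewrite !mxE; ring.
Qed.

Lemma dlin3 (A1 A2 A3 : R) (F1 F2 F3 : 'I_n -> 'I_n -> R) :
  \sum_a \sum_d (A1 * F1 a d + A2 * F2 a d + A3 * F3 a d)
  = A1 * (\sum_a \sum_d F1 a d) + A2 * (\sum_a \sum_d F2 a d) + A3 * (\sum_a \sum_d F3 a d).
Proof.
under eq_bigr do rewrite !big_split /= -!mulr_sumr.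
by rewrite !big_split /= !mulr_sumr.
Qed.

Lemma Gup_diff l : Gam_up g dg' l - Gam_up g dg l = \sum_m G l m * w m.
Proof.
rewrite /Gam_up -sumrB; under eq_bigr do rewrite -sumrB.
under eq_bigr do under eq_bigr do rewrite -mulrBr Chr_diff mulr_sumr mulr_sumr.
under eq_bigr do rewrite exchange_big.
rewrite exchange_big; apply: eq_bigr => m _ /=.
transitivity (\sum_a \sum_b ((G l m * 2^-1) * (G a b * xi a * h b m)
   + (G l m * 2^-1) * (G a b * h a m * xi b) + (- G l m * 2^-1 * xi m) * (G a b * h a b))).
  by apply: eq_bigr => a _; apply: eq_bigr => b _; ring.
rewrite dlin3 HL HR Htr xh.
have -> : \sum_a h a m * x a = w m by rewrite -xh; apply: eq_bigr => a _; rewrite mulrC.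
by field.
Qed.

Lemma Glow_diff k : Gam_low g dg' k - Gam_low g dg k = w k.
Proof.
rewrite /Gam_low -sumrB; under eq_bigr do rewrite -mulrBr Gup_diff.
rewrite -[RHS](contr_gG (fun m => w m) k); apply: eq_bigr => m _; by rewrite gsym.
Qed.

Lemma Gup_contr : \sum_l xi l * (Gam_up g dg' l - Gam_up g dg l) = q.
Proof.
under eq_bigr do rewrite Gup_diff mulr_sumr.
rewrite exchange_big; apply: eq_bigr => m _ /=.
rewrite /raise mulr_suml; apply: eq_bigr => l _; rewrite Gsym; ring.
Qed.

End Aux.

Theorem lemma3p2 (R : realFieldType) (n : nat) (hn : (3 <= n)%N)
  (g : 'M[R]_n) (dg : jet1 R n) (ddg : jet2 R n)
  (g_sym : g^T = g)
  (g_pos : forall v : 'rV[R]_n, v != 0 -> 0 < (v *m g *m v^T) ord0 ord0)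
  (g_det : \det g = 1)
  (dg_sym : forall k, (dg k)^T = dg k)
  (ddg_sym : forall j k, (ddg j k)^T = ddg j k /\ ddg j k = ddg k j)
  (xi : 'I_n -> R) (h : 'M[R]_n) (h_sym : h^T = h)
  (h_tan : \tr (invmx g *m h) = 0) :
  forall b c : 'I_n,
    \sum_(a < n) \sum_(d < n)
        raise g xi a * raise g xi d * sigma_Weyl g dg ddg xi h a b c d
    = (n%:R - 3) / (2 * (n%:R - 2)) *
      ( norm2 g xi ^+ 2 * h b c
        - norm2 g xi * (xi b * sigma_miGam_low g dg xi h c
                        + xi c * sigma_miGam_low g dg xi h b)
        + (n%:R - 2) / (n%:R - 1) * xi b * xi c *
            (\sum_(l < n) xi l * sigma_miGam_up g dg xi h l)
        + (n%:R - 1)^-1 * norm2 g xi *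
            (\sum_(l < n) xi l * sigma_miGam_up g dg xi h l) * g b c ).
Proof.
move=> b c.
have g_unit : g \in unitmx by rewrite unitmxE g_det unitr1.
have n3 : (3 : R) <= n%:R by rewrite (ler_nat R 3 n).
have n2 : n%:R - 2 != 0 :> R.
  by apply/negP => /eqP H; move: n3 H; clear; move=> n3 H; lra.
have n1 : n%:R - 1 != 0 :> R.
  by apply/negP => /eqP H; move: n3 H; clear; move=> n3 H; lra.
rewrite /sigma_Weyl /sigma_miGam_low /sigma_miGam_up.
rewrite contraction //.
rewrite !Glow_diff //.
rewrite Gup_contr //.
rewrite /pif /kk /ss.
by field; rewrite n1 n2.
Qed.
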